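(* Let $k\ge 2$ and $\pi=\pi_1\cdots\pi_n\in S_n(123,\,k(k-1)\cdots 21(k+1))$ with $n\ge 1$. Then the entry $n$ occupies one of the positions $1,2,\dots,k$. Moreover, let $\alpha_\pi$ be the smallest index $j\in\{2,\dots,n\}$ with $\pi_{j-1}<\pi_j$, and $\alpha_\pi=n+1$ if no such index exists. Then the active sites of $\pi$ (with respect to the class $S(123,\,k(k-1)\cdots 21(k+1))$) are exactly the first $\min(\alpha_\pi,k)$ sites of $\pi$. *)

(* Defs.v *)
From mathcomp Require Import all_boot.
Set Implicit Arguments. Unset Strict Implicit. Unset Printing Implicit Defensive.

Definition is_perm (n : nat) (s : seq nat) : Prop := perm_eq s (iota 1 n).

Definition order_iso (t p : seq nat) : Prop :=
  size t = size p /\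
  forall i j, i < size p -> j < size p ->
    (nth 0 t i < nth 0 t j) = (nth 0 p i < nth 0 p j).

Definition contains (s p : seq nat) : Prop :=
  exists t, subseq t s /\ order_iso t p.

Definition avoids (s p : seq nat) : Prop := ~ contains s p.

Definition pat123 : seq nat := [:: 1; 2; 3].
Definition patk (k : nat) : seq nat := rcons (rev (iota 1 k)) k.+1.

Definition in_class (k : nat) (s : seq nat) : Prop :=
  avoids s pat123 /\ avoids s (patk k).

(* Insert the new maximum n+1 (n = size s) into site i, 1 <= i <= n+1;
   site i is the gap immediately before the i-th entry (site n+1 = the end). *)
Definition insert_max (s : seq nat) (i : nat) : seq nat :=
  take i.-1 s ++ (size s).+1 :: drop i.-1 s.

Definition active_site (k : nat) (s : seq nat) (i : nat) : Prop :=
  in_class k (insert_max s i).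

(* alpha_pi: smallest j in {2..n} with pi_{j-1} < pi_j (1-based), else n+1 *)
Definition alpha (s : seq nat) : nat :=
  (find (fun j => nth 0 s j < nth 0 s j.+1) (iota 0 (size s).-1)).+2.

Definition pos_of (x : nat) (s : seq nat) : nat := (index x s).+1.

(* Main.v *)
Require Import Defs.
From mathcomp Require Import all_boot zify.
Set Implicit Arguments. Unset Strict Implicit. Unset Printing Implicit Defensive.

Definition gtr : rel nat := fun u v => v < u.
Lemma gtr_trans : transitive gtr.
Proof. rewrite /gtr => y x z; lia. Qed.

Lemma sorted_gt (a : seq nat) i j : sorted gtr a -> i < j -> j < size a ->
  nth 0 a j < nth 0 a i.
Proof.
move=> Hs Hij Hj.
have := @sorted_ltn_nth _ gtr gtr_trans 0 a Hs i j.
rewrite /gtr; apply; rewrite ?inE //; lia.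
Qed.

Lemma nth_patk k i : i <= k -> nth 0 (patk k) i = if i < k then k - i else k.+1.
Proof.
move=> Hi; rewrite /patk nth_rcons size_rev size_iota.
case: ifP => H.
  by rewrite nth_rev ?size_iota // nth_iota; lia.
by have -> : i == k by lia.
Qed.

Lemma dec_patk (a rest : seq nat) x k : sorted gtr a -> k <= size a ->
  (forall y, y \in a -> y < x) -> contains (a ++ x :: rest) (patk k).
Proof.
move=> Hs Hk Hx; exists (take k a ++ [:: x]); split.
  apply: cat_subseq; first exact: take_subseq.
  by rewrite /= eqxx sub0seq.
have Hsz : size (take k a ++ [:: x]) = k.+1 by rewrite size_cat size_takel //= addn1.
have Hpk : size (patk k) = k.+1 by rewrite /patk size_rcons size_rev size_iota.
split; first by rewrite Hsz Hpk.
rewrite Hpk => i j Hi Hj.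
have Ht : forall l, l < k.+1 -> nth 0 (take k a ++ [:: x]) l = if l < k then nth 0 a l else x.
  move=> l Hl; rewrite nth_cat size_takel //; case: ifP => H; first by rewrite nth_take.
  by have -> : l - k = 0 by lia.
rewrite !Ht // !nth_patk; try lia.
case: (ltnP i k) => Hik; case: (ltnP j k) => Hjk.
- case: (ltngtP i j) => Hij.
  + have := sorted_gt Hs Hij (leq_trans Hjk Hk); lia.
  + have := sorted_gt Hs Hij (leq_trans Hik Hk); lia.
  + subst; lia.
- have := Hx (nth 0 a i) (mem_nth _ (leq_trans Hik Hk)); lia.
- have := Hx (nth 0 a j) (mem_nth _ (leq_trans Hjk Hk)); lia.
- lia.
Qed.

Lemma asc_123 (a rest : seq nat) x j : j.+1 < size a ->
  nth 0 a j < nth 0 a j.+1 -> nth 0 a j.+1 < x -> contains (a ++ x :: rest) pat123.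
Proof.
move=> Hj H1 H2.
exists ([:: nth 0 a j; nth 0 a j.+1] ++ [:: x]); split.
  apply: cat_subseq; last by rewrite /= eqxx sub0seq.
  rewrite -[X in subseq _ X](cat_take_drop j a) (drop_nth 0) ?(ltnW Hj) //.
  rewrite (drop_nth 0 (n:=j.+1)) //.
  rewrite -[[:: _; _]]cat0s; apply: cat_subseq; first exact: sub0seq.
  by rewrite /= !eqxx sub0seq.
split=> // i k Hi Hk.
by case: i Hi => [|[|[|i]]] //= _; case: k Hk => [|[|[|k]]] //= _; lia.
Qed.

Lemma contains_ins (a b p : seq nat) x :
  (forall y, y \in a ++ b -> y < x) ->
  (forall j, j < (size p).-1 -> nth 0 p j < nth 0 p (size p).-1) ->
  contains (a ++ x :: b) p ->
  contains (a ++ b) p \/ exists t1, subseq t1 a /\ (size t1).+1 = size p /\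
    forall j j', j < size t1 -> j' < size t1 ->
      (nth 0 t1 j < nth 0 t1 j') = (nth 0 p j < nth 0 p j').
Proof.
move=> Hlt Hmax [t [/subseqP [m Hm ->] [Hsz Hiso]]].
rewrite -(cat_take_drop (size a) m) in Hsz Hiso *.
have Hs1 : size (take (size a) m) = size a.
  by rewrite size_takel // Hm size_cat leq_addr.
rewrite mask_cat // in Hsz Hiso *.
have Hd : size (drop (size a) m) = (size b).+1 by rewrite size_drop Hm size_cat /=; lia.
move: Hd Hsz Hiso; case: (drop (size a) m) => [//|c m2] [Hm2] Hsz Hiso.
set t1 := mask (take (size a) m) a in Hsz Hiso *.
case: c Hsz Hiso => /= Hsz Hiso.
  right. exists t1; split; first exact: mask_subseq.
  have Ht2 : mask m2 b = [::].
    case E: (mask m2 b) => [//|y t2']. exfalso.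
    rewrite E in Hsz Hiso.
    have Hl : (size p).-1 < size p by rewrite -Hsz size_cat /=; lia.
    have Hp : size t1 < size p by rewrite -Hsz size_cat /=; lia.
    have := Hiso _ _ Hl Hp.
    rewrite -Hsz nth_last last_cat /= nth_cat ltnn subnn /=.
    rewrite Hlt; last first.
      rewrite mem_cat; apply/orP; right; apply: (mem_mask (m:=m2)).
      by rewrite E mem_last.
    move=> /esym; rewrite Hsz.
    have : size t1 < (size p).-1 by rewrite -Hsz size_cat /=; lia.
    move=> /Hmax H; lia.
  rewrite Ht2 in Hsz Hiso; split; first by rewrite -Hsz size_cat /= addn1.
  move=> j j' Hj Hj'.
  have := Hiso j j'; rewrite -Hsz size_cat /= !nth_cat Hj Hj'.
  by apply; lia.
left; exists (mask (take (size a) m) a ++ mask m2 b); split=> //.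
by apply: cat_subseq; apply: mask_subseq.
Qed.

Lemma noasc_sorted (a : seq nat) : uniq a ->
  (forall j, j.+1 < size a -> ~~ (nth 0 a j < nth 0 a j.+1)) -> sorted gtr a.
Proof.
move=> Hu H; apply/(sortedP 0) => j Hj; rewrite /gtr.
have := H j Hj.
have : nth 0 a j != nth 0 a j.+1 by rewrite nth_uniq ?(ltnW Hj) // ltn_eqF.
lia.
Qed.

Lemma dichot (a : seq nat) : uniq a ->
  sorted gtr a \/ exists j, j.+1 < size a /\ nth 0 a j < nth 0 a j.+1.
Proof.
move=> Hu.
case E: (has (fun j => nth 0 a j < nth 0 a j.+1) (iota 0 (size a).-1)).
  move/hasP: E => [j]; rewrite mem_iota => Hj Hp; right; exists j; split=> //; lia.
left; apply: noasc_sorted => // j Hj.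
move/hasPn: E; apply; rewrite mem_iota; lia.
Qed.

Lemma prefix_lemma (a rest : seq nat) x k : uniq a ->
  (forall y, y \in a -> y < x) -> in_class k (a ++ x :: rest) ->
  sorted gtr a /\ size a < k.
Proof.
move=> Hu Hx [H1 H2].
case: (dichot Hu) => [Hs|[j [Hj Hasc]]].
  split=> //; rewrite ltnNge; apply/negP => Hk; apply: H2.
  exact: dec_patk.
exfalso; apply: H1; apply: (asc_123 _ Hj Hasc).
exact/Hx/mem_nth.
Qed.

Theorem mainTheorem2 (k n : nat) (s : seq nat) :
  2 <= k -> 1 <= n -> is_perm n s -> in_class k s ->
  (1 <= pos_of n s <= k) /\
  (forall i, 1 <= i <= n.+1 ->
     (active_site k s i <-> i <= minn (alpha s) k)).
Proof.
move=> Hk Hn Hp Hcl.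
have Hsz : size s = n by rewrite (perm_size Hp) size_iota.
have Hu : uniq s by rewrite (perm_uniq Hp) iota_uniq.
have Hmem : forall y, y \in s -> 0 < y <= n.
  by move=> y; rewrite (perm_mem Hp) mem_iota; lia.
split.
  rewrite /pos_of ltnS /=.
  have Hin : n \in s by rewrite (perm_mem Hp) mem_iota; lia.
  set q := index n s.
  have Hq : q < size s by rewrite index_mem.
  have Hdec : s = take q s ++ n :: drop q.+1 s.
    have -> : n :: drop q.+1 s = drop q s by rewrite (drop_nth 0 Hq) nth_index.
    by rewrite cat_take_drop.
  have Hu' := Hu; rewrite Hdec cat_uniq /= in Hu'.
  move/and3P: Hu' => [Hua Hhas _].
  rewrite Hdec in Hcl.
  have Hx : forall y, y \in take q s -> y < n.
    move=> y Hy.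
    have Hys : y \in s by rewrite (mem_take Hy).
    have := Hmem y Hys.
    have : y != n.
      apply/eqP => Eyn; subst y.
      by move: Hhas; rewrite negb_or Hy.
    lia.
  have [_ Hqk] := prefix_lemma Hua Hx Hcl.
  rewrite size_takel ?(ltnW Hq) in Hqk; lia.
move=> i Hi.
have Hcat : s = take i.-1 s ++ drop i.-1 s by rewrite cat_take_drop.
have Hsa : size (take i.-1 s) = i.-1 by rewrite size_takel // Hsz; lia.
have Hlt : forall y, y \in take i.-1 s ++ drop i.-1 s -> y < (size s).+1.
  by rewrite -Hcat Hsz => y /Hmem; lia.
have Hua : uniq (take i.-1 s) by rewrite take_uniq.
rewrite /active_site /insert_max /alpha.
set P := (fun j => nth 0 s j < nth 0 s j.+1).
set f := find P (iota 0 (size s).-1).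
split.
  move=> Hc.
  have [Hs Hik] := prefix_lemma Hua (fun y Hy => Hlt y (ltac:(by rewrite mem_cat Hy))) Hc.
  rewrite leq_min; apply/andP; split; last by lia.
  rewrite leqNgt; apply/negP => Hfi.
  have Hf : f < size (iota 0 (size s).-1) by rewrite size_iota; lia.
  have := nth_find 0 (ltac:(by rewrite has_find) : has P (iota 0 (size s).-1)).
  rewrite -/f nth_iota; last by rewrite size_iota in Hf.
  rewrite /P add0n.
  have := sorted_gt Hs (ltnSn f) (_ : f.+1 < size (take i.-1 s)).
  rewrite !nth_take; try lia.
rewrite leq_min => /andP [Hia Hik].
have Hs : sorted gtr (take i.-1 s).
  apply: noasc_sorted => // j Hj.
  rewrite Hsa in Hj; rewrite !nth_take; try lia.
  have Hjf : j < f by lia.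
  have := before_find 0 Hjf.
  rewrite nth_iota; last lia.
  by rewrite /P add0n => ->.
split.
- move=> Hc.
  have Hm : forall j, j < (size pat123).-1 -> nth 0 pat123 j < nth 0 pat123 (size pat123).-1.
    by move=> [|[|[|j]]].
  have [Hc'|[t1 [Hsub [Hst Hiso]]]] := contains_ins Hlt Hm Hc.
  + by apply: Hcl.1; rewrite cat_take_drop in Hc'.
  + have Hs1 := subseq_sorted gtr_trans Hsub Hs.
    have Ht2 : size t1 = 2 by move: Hst; rewrite /pat123 /=; lia.
    have := Hiso 0 1; rewrite Ht2 /= => /(_ isT isT).
    have := sorted_gt Hs1 (ltnSn 0) (_ : 1 < size t1).
    rewrite Ht2 => /(_ isT); lia.
- move=> Hc.
  have Hpk : size (patk k) = k.+1 by rewrite /patk size_rcons size_rev size_iota.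
  have Hm : forall j, j < (size (patk k)).-1 -> nth 0 (patk k) j < nth 0 (patk k) (size (patk k)).-1.
    rewrite Hpk /= => j Hj; rewrite !nth_patk; try lia.
    by rewrite ltnn; case: ifP; lia.
  have [Hc'|[t1 [Hsub [Hst Hiso]]]] := contains_ins Hlt Hm Hc.
  + by apply: Hcl.2; rewrite cat_take_drop in Hc'.
  + have := size_subseq Hsub; rewrite Hsa; lia.
Qed.
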